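(* Let $\gamma \in [0,1)$. Let $P$ be a valid p-value for a null hypothesis $H_0$, i.e. $P \in [0,1]$ and $\Pr(P \le s) \le s$ for all $s \in [0,1]$ under $H_0$, and let $Q$ be an arbitrary $[0,1]$-valued random variable, with any dependence structure between $P$ and $Q$. Let $T \in \{0,1\}$ be a random variable such that, conditionally on $(Q,P)$, $T \sim \mathrm{Bern}(1-\gamma Q)$ (i.e. $T$ is drawn based on $Q$ using additional independent randomness). Define the active p-value $$\tilde P := (1-T)\,Q + T\,(1-\gamma)^{-1} P.$$ Then $\tilde P$ is a valid p-value: under $H_0$, $\Pr(\tilde P \le s) \le s$ for all $s \in [0,1]$.
   Context: $Q$ is a ''proxy'' p-value on which no distributional assumption is made (it need not be superuniform under $H_0$). *)

(* Defs.v *)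
From HB Require Import structures.
From mathcomp Require Import all_boot all_order all_algebra.
From mathcomp Require Import all_classical all_reals all_analysis.
Set Implicit Arguments. Unset Strict Implicit. Unset Printing Implicit Defensive.
Import Order.TTheory GRing.Theory Num.Theory.
Local Open Scope classical_set_scope.
Local Open Scope ring_scope.

Definition valid_pvalue d (Om : measurableType d) (R : realType)
  (mu : probability Om R) (P : Om -> R) : Prop :=
  (forall w, 0 <= P w <= 1) /\
  forall s : R, 0 <= s <= 1 -> (mu [set w | (P w <= s)%R] <= s%:E)%E.

Definition superuniform d (Om : measurableType d) (R : realType)
  (mu : probability Om R) (X : Om -> R) : Prop :=
  forall s : R, 0 <= s <= 1 -> (mu [set w | (X w <= s)%R] <= s%:E)%E.

(* Conditionally on (Q,P), T ~ Bern(p(Q,P)):  for every measurable set A of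
   R x R,  Pr(T = 1, (Q,P) \in A) = E[ p(Q,P) 1{(Q,P) \in A} ]. *)
Definition cond_bernoulli d (Om : measurableType d) (R : realType)
  (mu : probability Om R) (T : Om -> R) (Q P : Om -> R) (p : R -> R -> R) : Prop :=
  forall A : set (R * R), measurable A ->
    mu ([set w | T w = 1] `&` (fun w => (Q w, P w)) @^-1` A) =
    (\int[mu]_(w in (fun w => (Q w, P w)) @^-1` A) (p (Q w) (P w))%:E)%E.

Definition active_pvalue (R : realType) (gamma : R) (Om : Type)
  (T Q P : Om -> R) : Om -> R :=
  fun w => (1 - T w) * Q w + T w * ((1 - gamma)^-1 * P w).

(* Main.v *)
Require Import Defs.
From HB Require Import structures.
From mathcomp Require Import all_boot all_order all_algebra.
From mathcomp Require Import all_classical all_reals all_analysis.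
From mathcomp Require Import lra.
Import Order.TTheory GRing.Theory Num.Theory.
Local Open Scope classical_set_scope.
Local Open Scope ring_scope.

Lemma mle_set d (Om : measurableType d) (R : realType) (f : Om -> R) (c : R) :
  measurable_fun setT f -> measurable [set w | f w <= c].
Proof.
move=> mf; have := mf measurableT _ (measurable_itv `]-oo, c]); rewrite setTI.
congr measurable; apply/seteqP; split => w /=; rewrite in_itv /= //.
Qed.

Lemma meq_set d (Om : measurableType d) (R : realType) (f : Om -> R) (c : R) :
  measurable_fun setT f -> measurable [set w | f w = c].
Proof.
move=> mf; have := mf measurableT _ (measurable_set1 c); rewrite setTI.
by congr measurable.
Qed.

Theorem proposition2 (R : realType) (d : measure_display) (Om : measurableType d)
  (mu : probability Om R) (gamma : R) (P Q T : Om -> R) :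
  0 <= gamma < 1 ->
  measurable_fun setT P -> measurable_fun setT Q -> measurable_fun setT T ->
  valid_pvalue mu P ->
  (forall w, 0 <= Q w <= 1) ->
  (forall w, T w = 0 \/ T w = 1) ->
  cond_bernoulli mu T Q P (fun q _ => 1 - gamma * q) ->
  superuniform mu (active_pvalue gamma T Q P).
Proof.
move=> /andP[g0 g1] mP mQ mT [P01 Pv] Q01 T01 cb s /andP[s0 s1].
set D := [set w | Q w <= s].
set T1 := [set w | T w = 1].
set P1 := [set w | P w <= (1 - gamma) * s].
have mD : measurable D by exact: mle_set.
have mT1 : measurable T1 by exact: meq_set.
have mP1 : measurable P1 by exact: mle_set.
have ->: [set w | active_pvalue gamma T Q P w <= s] = (D `\` T1) `|` (T1 `&` P1).
  apply/seteqP; split => w /=; rewrite /active_pvalue /D /T1 /P1 /=.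
    have g1' : 0 < 1 - gamma by rewrite subr_gt0.
    case: (T01 w) => ->.
      by rewrite subr0 mul1r !mul0r addr0 => h; left; split => //; apply/eqP; rewrite eq_sym oner_neq0.
    rewrite subrr mul0r add0r mul1r => h; right; split => //.
    by move: h; rewrite ler_pdivrMl.
  have g1' : 0 < 1 - gamma by rewrite subr_gt0.
  case => [[h1 h2]|[h1 h2]].
    by case: (T01 w) h2 => -> // _; rewrite subr0 mul1r !mul0r addr0.
  by rewrite h1 subrr mul0r add0r mul1r ler_pdivrMl.
have hA : measurable [set x : R * R | x.1 <= s].
  by apply: mle_set; exact: measurable_fst.
have cbD := cb _ hA.
have eD : mu D = (mu (D `\` T1) + mu (T1 `&` D))%E by rewrite setIC; exact: measureDI.
have hI : ((1 - gamma * s)%:E * mu D <=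
   \int[mu]_(w in D) (1 - gamma * Q w)%:E)%E.
  have gs1 : gamma * s <= 1 by apply: mulr_ile1 => //; exact: ltW.
  rewrite -integral_cst //; apply: ge0_le_integral => //.
  - by move=> w _ /=; rewrite lee_fin subr_ge0.
  - apply/measurable_realfun.measurable_EFinP; apply: measurable_funTS.
    by apply: measurable_realfun.measurable_funB => //; apply: measurable_realfun.measurable_funM.
  - by move=> w Dw /=; rewrite lee_fin lerB // ler_wpM2l.
have ma : measurable (D `\` T1) by exact: measurableD.
have fa : mu (D `\` T1) \is a fin_num.
  by rewrite ge0_fin_numE // (le_lt_trans (probability_le1 _ _)) // ltey.
have fm : mu D \is a fin_num.
  by rewrite ge0_fin_numE // (le_lt_trans (probability_le1 _ _)) // ltey.
have m1 : (mu D <= 1)%E by exact: probability_le1.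
have hb : (mu (D `\` T1) <= (gamma * s)%:E)%E.
  have h1 : (mu (D `\` T1) + (1 - gamma * s)%:E * mu D <= mu D)%E.
    by rewrite [X in (_ <= X)%E]eD cbD leeD2l.
  move: h1 m1; rewrite -(fineK fa) -(fineK fm) -EFinM -EFinD !lee_fin.
  have a0 : 0 <= fine (mu (D `\` T1)) by rewrite fine_ge0.
  have gs0 : 0 <= gamma * s by rewrite mulr_ge0.
  move=> h1 h2; have : fine (mu (D `\` T1)) <= gamma * s * fine (mu D) by
    move: h1; rewrite mulrBl mul1r; lra.
  move=> h3; apply: (le_trans h3); rewrite -[X in _ <= X]mulr1.
  by rewrite ler_wpM2l.
apply: (le_trans (measureU2 _ ma (measurableI _ _ mT1 mP1))).
apply: (@le_trans _ _ ((gamma * s)%:E + ((1 - gamma) * s)%:E)%E); last first.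
  by rewrite -EFinD lee_fin mulrBl mul1r addrC subrK.
apply: leeD => //.
have sub : T1 `&` P1 `<=` P1 by move=> w [].
apply: (le_trans (le_measure _ _ _ sub)).
- by rewrite inE; exact: measurableI.
- by rewrite inE.
apply: Pv; rewrite mulr_ge0 ?subr_ge0 ?(ltW g1) //=.
by rewrite mulr_ile1 ?subr_ge0 ?(ltW g1) // lerBlDr lerDl.
Qed.
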